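(* Let $p\equiv 1\pmod 4$ be a prime dividing $n$, and let $Q_p\subseteq\mathbb{Z}/p\mathbb{Z}$ be the set of nonzero quadratic residues modulo $p$. Let $a,b,c$ be integers coprime to $p$ with $\left(\frac{a}{p}\right)=-\left(\frac{c}{p}\right)$, and put $J_+=\{aq+b \bmod p: q\in Q_p\}$ and $J_-=\{cq-b\bmod p : q\in Q_p\}$ (viewed as subsets of $\{0,\dots,p-1\}$). Let $A$ be a subgroup of $(\mathbb{Z}/n\mathbb{Z})^\times$ which is the disjoint union $$A=\{jn/p+1\bmod n: j\in J_+\}\sqcup\{jn/p-1 \bmod n: j\in J_-\},$$ and let $X=A\cdot 1=A$. Then for $y\in\mathbb{Z}/n\mathbb{Z}$: if $p\mid y$, then $\sigma_X(y)$ lies in the real interval $[1-p,p-1]$; if $p\nmid y$, then $z=\sigma_X(y)$ satisfies $(\operatorname{Re} z)^2+(\operatorname{Im} z)^2/p=1$.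
   Context: Write $e(\theta)=\exp(2\pi i\theta)$. For a subgroup $A$ of $(\mathbb{Z}/n\mathbb{Z})^\times$ and $r\in\mathbb{Z}/n\mathbb{Z}$, let $X=Ar=\{ar:a\in A\}$ and $\sigma_X(y)=\sum_{x\in X}e\left(\frac{xy}{n}\right)$ for $y\in\mathbb{Z}/n\mathbb{Z}$. $\left(\frac{\cdot}{p}\right)$ denotes the Legendre symbol. The condition $p\mid y$ is well defined for $y\in\mathbb{Z}/n\mathbb{Z}$ since $p\mid n$. *)

(* Defs.v *)
From Stdlib Require Import Reals ZArith Znumtheory List Bool.
Import ListNotations.
Open Scope Z_scope.

Definition zrange (m : Z) : list Z := map Z.of_nat (seq 0 (Z.to_nat m)).

Definition is_qr (p q : Z) : bool :=
  existsb (fun x => (x * x) mod p =? q mod p) (zrange p).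

Definition legendre (a p : Z) : Z :=
  if a mod p =? 0 then 0 else if is_qr p a then 1 else -1.

Definition inQ (p q : Z) : bool := (0 <? q) && (q <? p) && is_qr p q.

Definition inJplus (p a b j : Z) : bool :=
  existsb (fun q => inQ p q && ((a * q + b) mod p =? j)) (zrange p).
Definition inJminus (p c b j : Z) : bool :=
  existsb (fun q => inQ p q && ((c * q - b) mod p =? j)) (zrange p).

Definition inAplus (n p a b x : Z) : bool :=
  existsb (fun j => inJplus p a b j && (x =? (j * (n / p) + 1) mod n)) (zrange p).
Definition inAminus (n p c b x : Z) : bool :=
  existsb (fun j => inJminus p c b j && (x =? (j * (n / p) - 1) mod n)) (zrange p).

(* A, as a subset of Z/nZ = {0,...,n-1}. *)
Definition inA (n p a b c x : Z) : bool := inAplus n p a b x || inAminus n p c b x.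

Open Scope R_scope.

(* sigma_X(y) = sum_{x in X} e(xy/n), split into real and imaginary parts,
   where e(t) = exp(2 pi i t) = cos(2 pi t) + i sin(2 pi t). *)
Definition sigma_re (n : Z) (X : Z -> bool) (y : Z) : R :=
  fold_right Rplus 0
    (map (fun x => if X x then cos (2 * PI * IZR (x * y) / IZR n) else 0) (zrange n)).
Definition sigma_im (n : Z) (X : Z -> bool) (y : Z) : R :=
  fold_right Rplus 0
    (map (fun x => if X x then sin (2 * PI * IZR (x * y) / IZR n) else 0) (zrange n)).

(* Main.v *)
Require Import Defs.
From Stdlib Require Import Reals ZArith Znumtheory List Bool.
From Stdlib Require Lia Lra.
From mathcomp Require all_boot all_order all_algebra finfield Rstruct zify.

Module Dev.
Import Lia Lra.
Import all_boot all_order all_algebra finfield Rstruct zify.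
Delimit Scope Z_scope with Z.
Delimit Scope R_scope with R.
Delimit Scope ring_scope with ring.

Open Scope R_scope.

Lemma cos_periodZ x k : cos (x + 2 * IZR k * PI) = cos x.
Proof.
destruct (Z_le_gt_dec 0 k) as [H|H].
- rewrite -(Z2Nat.id k H) -INR_IZR_INZ; apply cos_period.
- have E : x = (x + 2 * IZR k * PI) + 2 * INR (Z.to_nat (- k)) * PI.
    rewrite INR_IZR_INZ Z2Nat.id; last lia. rewrite opp_IZR; ring.
  by rewrite {2}E cos_period.
Qed.

Lemma sin_periodZ x k : sin (x + 2 * IZR k * PI) = sin x.
Proof.
destruct (Z_le_gt_dec 0 k) as [H|H].
- rewrite -(Z2Nat.id k H) -INR_IZR_INZ; apply sin_period.
- have E : x = (x + 2 * IZR k * PI) + 2 * INR (Z.to_nat (- k)) * PI.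
    rewrite INR_IZR_INZ Z2Nat.id; last lia. rewrite opp_IZR; ring.
  by rewrite {2}E sin_period.
Qed.

Definition cz (P t : Z) : R := cos (2 * PI * IZR t / IZR P).
Definition sz (P t : Z) : R := sin (2 * PI * IZR t / IZR P).

Lemma cz_mod (P t t' : Z) : (P <> 0)%Z -> (t mod P = t' mod P)%Z -> cz P t = cz P t'.
Proof.
move=> HP Ht.
have -> : t = (t' + P * ((t / P) - (t' / P)))%Z.
  have H1 := Z_div_mod_eq_full t P; have H2 := Z_div_mod_eq_full t' P.
  rewrite Ht in H1. lia.
rewrite /cz plus_IZR mult_IZR.
have HP' : IZR P <> 0 by apply not_0_IZR.
set k := (t / P - t' / P)%Z.
have -> : 2 * PI * (IZR t' + IZR P * IZR k) / IZR P = 2 * PI * IZR t' / IZR P + 2 * IZR k * PI.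
  by field.
by rewrite cos_periodZ.
Qed.

Lemma sz_mod (P t t' : Z) : (P <> 0)%Z -> (t mod P = t' mod P)%Z -> sz P t = sz P t'.
Proof.
move=> HP Ht.
have -> : t = (t' + P * ((t / P) - (t' / P)))%Z.
  have H1 := Z_div_mod_eq_full t P; have H2 := Z_div_mod_eq_full t' P.
  rewrite Ht in H1. lia.
rewrite /sz plus_IZR mult_IZR.
have HP' : IZR P <> 0 by apply not_0_IZR.
set k := (t / P - t' / P)%Z.
have -> : 2 * PI * (IZR t' + IZR P * IZR k) / IZR P = 2 * PI * IZR t' / IZR P + 2 * IZR k * PI.
  by field.
by rewrite sin_periodZ.
Qed.

Lemma cz_opp (P t : Z) : cz P (- t) = cz P t.
Proof. rewrite /cz opp_IZR -cos_neg; congr cos; lra. Qed.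
Lemma sz_opp (P t : Z) : sz P (- t) = - sz P t.
Proof. rewrite /sz opp_IZR -sin_neg; congr sin; lra. Qed.
Lemma cz0 (P : Z) : cz P 0 = 1.
Proof. by rewrite /cz Rmult_0_r Rdiv_0_l cos_0. Qed.
Lemma cz_sub (P t u : Z) : cz P (t - u) = cz P t * cz P u + sz P t * sz P u.
Proof. rewrite /cz /sz -cos_minus minus_IZR; congr cos; lra. Qed.
Lemma cz_add (P t u : Z) : cz P (t + u) = cz P t * cz P u - sz P t * sz P u.
Proof. rewrite /cz /sz -cos_plus plus_IZR; congr cos; lra. Qed.
Lemma sz_add (P t u : Z) : sz P (t + u) = sz P t * cz P u + cz P t * sz P u.
Proof. rewrite /cz /sz -sin_plus plus_IZR; congr sin; lra. Qed.

Lemma telescope (al : R) (N : nat) :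
  \big[Rplus/0]_(i < N) (2 * sin al * cos (2 * (INR i * al)))
  = sin ((2 * INR N - 1) * al) + sin al.
Proof.
elim: N => [|N IH].
  rewrite big_ord0 /=. replace ((2 * 0 - 1) * al) with (- al) by ring. rewrite sin_neg; ring.
rewrite big_ord_recr IH -/(INR N.+1) S_INR /=.
have E1 : (2 * (INR N + 1) - 1) * al = 2 * (INR N * al) + al by ring.
have E2 : (2 * INR N - 1) * al = 2 * (INR N * al) - al by ring.
rewrite E1 E2 sin_plus sin_minus; ring.
Qed.

Lemma geom_sum (P k : Z) : (0 < P)%Z -> ~ (P | k)%Z ->
  \big[Rplus/0]_(i < Z.to_nat P) cz P (k * Z.of_nat i) = 0.
Proof.
move=> HP Hk.
set al := PI * IZR k / IZR P.
have HP' : IZR P <> 0 by apply not_0_IZR; lia.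
have Hs : sin al <> 0.
  move=> /sin_eq_0_0 [z Hz]. apply: Hk. exists z.
  have : IZR k = IZR z * IZR P.
    have HPI := PI_neq0. rewrite /al in Hz.
    have -> : IZR k = (PI * IZR k / IZR P) * IZR P / PI by field.
    rewrite Hz; field; auto.
  by rewrite -mult_IZR => /eq_IZR.
have T := telescope al (Z.to_nat P).
have E : \big[Rplus/0]_(i < Z.to_nat P) (2 * sin al * cos (2 * (INR i * al))) =
   2 * sin al * \big[Rplus/0]_(i < Z.to_nat P) cz P (k * Z.of_nat i).
  rewrite big_distrr /=; apply: eq_bigr => i _; congr (_ * _).
  rewrite /cz /al mult_IZR -INR_IZR_INZ; congr cos; field; auto.
have Hend : sin ((2 * INR (Z.to_nat P) - 1) * al) + sin al = 0.
  rewrite INR_IZR_INZ Z2Nat.id; last lia.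
  have -> : (2 * IZR P - 1) * al = - al + 2 * IZR k * PI by rewrite /al; field.
  rewrite sin_periodZ sin_neg; ring.
rewrite E Hend in T.
have : 2 * sin al <> 0 by apply Rmult_integral_contrapositive; split; lra.
move=> H2. apply (Rmult_eq_reg_l (2 * sin al)); last done. lra.
Qed.

Set Implicit Arguments.
Unset Strict Implicit.

Lemma Zmod_nat (m p : nat) : Z.of_nat (m %% p) = (Z.of_nat m mod Z.of_nat p)%Z.
Proof.
case: p => [|p]; first by rewrite modn0 Zmod_0_r.
apply: (Z.mod_unique _ _ (Z.of_nat (m %/ p.+1))).
  left; split; [lia|]. have := ltn_pmod m (ltn0Sn p). lia.
rewrite {1}(divn_eq m p.+1). lia.
Qed.

Section Fp.
Variable p : nat.
Hypothesis pr : prime p.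
Hypothesis p4 : (p %% 4 = 1)%N.
Local Notation F := 'F_p.
Local Open Scope ring_scope.
Import GRing.Theory.

Lemma natr_F (x : F) : (val x)%:R = x.
Proof. exact: natr_Zp. Qed.
Lemma val_mulF (x y : F) : val (x * y) = ((val x * val y) %% p)%N.
Proof. by rewrite -(val_Fp_nat pr) GRing.natrM !natr_F. Qed.
Lemma val_addF (x y : F) : val (x + y) = ((val x + val y) %% p)%N.
Proof. by rewrite -(val_Fp_nat pr) GRing.natrD !natr_F. Qed.
Lemma val_ltF (x : F) : (val x < p)%N.
Proof. by move: (ltn_ord x); rewrite {2}(Fp_cast pr). Qed.

Definition h := (p.-1)./2.
Lemma p_gt1 : (1 < p)%N. Proof. exact: prime_gt1. Qed.
Lemma h2 : (h * 2 = p.-1)%N.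
Proof. rewrite /h. have := p_gt1. have := p4. lia. Qed.
Lemma h_even : ~~ odd h.
Proof. rewrite /h. have := p_gt1. have := p4. lia. Qed.
Lemma h_gt0 : (0 < h)%N.
Proof. rewrite /h. have := p_gt1. have := p4. lia. Qed.

Lemma fermatF (x : F) : x != 0 -> x ^+ p.-1 = 1.
Proof.
move=> nz; apply: (mulfI nz); rewrite mulr1 -exprS prednK ?prime_gt0 //.
by rewrite -{2}(expf_card x) card_Fp.
Qed.

Lemma xh_pm1 (x : F) : x != 0 -> (x ^+ h == 1) || (x ^+ h == -1).
Proof. by move=> nz; rewrite -sqrf_eq1 -exprM h2 fermatF. Qed.

Lemma m1_neq1 : (-1 : F) != 1.
Proof.
apply/eqP => E. have : (2%:R : F) = 0 by rewrite -[2%N]/(1 + 1)%N natrD -{1}E addNr.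
move/(congr1 (@nat_of_ord _)); rewrite /= (Fp_cast pr) !modn_small //; have := p_gt1; have := p4; lia.
Qed.

Lemma sqr_inj (i j : nat) : (0 < i <= h)%N -> (0 < j <= h)%N ->
  (i%:R : F) ^+ 2 = (j%:R) ^+ 2 -> i = j.
Proof.
move=> Hi Hj /eqP; rewrite -subr_eq0 subr_sqr mulf_eq0 => /orP [|].
  rewrite subr_eq0 => /eqP /(congr1 (@nat_of_ord _)); rewrite /= !(val_Fp_nat pr) !modn_small //.
  have := h2; lia. have := h2; lia.
rewrite -natrD => /eqP /(congr1 (@nat_of_ord _)); rewrite /= (val_Fp_nat pr) modn_small //.
  lia. have := h2; lia.
Qed.

Definition QR : {set F} := [set x : F | x ^+ h == 1].
Definition sqf (i : 'I_h) : F := (i.+1)%:R ^+ 2.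

Lemma sqf_inj : injective sqf.
Proof.
move=> i j /sqr_inj H; apply: val_inj; apply: succn_inj; apply: H.
- by have := ltn_ord i; lia.
- by have := ltn_ord j; lia.
Qed.

Lemma sqf_QR : sqf @: setT \subset QR.
Proof.
apply/subsetP => x /imsetP [i _ ->]; rewrite inE /sqf -exprM mulnC h2 fermatF //.
apply/eqP => /(congr1 (@nat_of_ord _)); rewrite /= (val_Fp_nat pr) modn_small //.
have := ltn_ord i; have := h2; lia.
Qed.

Lemma card_QR : #|QR| = h.
Proof.
apply/eqP; rewrite eqn_leq; apply/andP; split.
  rewrite cardE; apply: max_unity_roots; first exact: h_gt0.
    by apply/allP => x; rewrite mem_enum inE unity_rootE.
  exact: enum_uniq.
have := subset_leq_card sqf_QR; rewrite card_imset; last exact: sqf_inj.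
by rewrite cardsT card_ord.
Qed.

Lemma QR_sqf : QR = sqf @: setT.
Proof.
apply/eqP; rewrite eq_sym eqEcard sqf_QR card_QR card_imset; last exact: sqf_inj.
by rewrite cardsT card_ord andTb leqnn.
Qed.

Lemma QR_square (x : F) : x != 0 -> (x ^+ h == 1) = [exists t, t * t == x].
Proof.
move=> nz; apply/idP/existsP.
  move=> H; have : x \in QR by rewrite inE.
  rewrite QR_sqf => /imsetP [i _ ->]; exists (i.+1)%:R; by rewrite /sqf expr2.
move=> [t /eqP E]; rewrite -E -expr2 -exprM mulnC h2 fermatF //.
by apply: contra nz; rewrite -E => /eqP ->; rewrite mul0r.
Qed.

Lemma exists_nonres : exists r : F, (r != 0) && (r ^+ h != 1).
Proof.
apply/existsP; apply: contraT; rewrite negb_exists => /forallP H.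
have : [set~ (0 : F)] \subset QR.
  apply/subsetP => x; rewrite !inE => nz. by have := H x; rewrite nz /= negbK.
move/subset_leq_card; rewrite cardsC1 card_QR card_Fp // /h. have := p_gt1. lia.
Qed.
End Fp.

Section FpR.
Variable p : nat.
Hypothesis pr : prime p.
Hypothesis p4 : (p %% 4 = 1)%N.
Local Notation F := 'F_p.
Local Notation P := (Z.of_nat p).
Local Notation h := (h p).
Local Open Scope ring_scope.
Import GRing.Theory.

Definition vz (x : F) : Z := Z.of_nat (val x).

Lemma P_pos : (0 < P)%Z.
Proof. have := prime_gt1 pr; lia. Qed.
Lemma vz_range x : (0 <= vz x < P)%Z.
Proof. rewrite /vz; have := val_ltF pr x; lia. Qed.
Lemma vz_mod x : (vz x mod P = vz x)%Z.
Proof. apply: Z.mod_small; exact: vz_range. Qed.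
Lemma vz_mul x y : vz (x * y) = ((vz x * vz y) mod P)%Z.
Proof. by rewrite /vz (val_mulF pr) Zmod_nat Nat2Z.inj_mul. Qed.
Lemma vz_add x y : vz (x + y) = ((vz x + vz y) mod P)%Z.
Proof. by rewrite /vz (val_addF pr) Zmod_nat Nat2Z.inj_add. Qed.
Lemma vz_nat n : vz (n%:R) = (Z.of_nat n mod P)%Z.
Proof. rewrite /vz; change (Z.of_nat (nat_of_ord (n%:R : F)) = (Z.of_nat n mod P)%Z); by rewrite (val_Fp_nat pr) Zmod_nat. Qed.
Lemma vz0 : vz 0 = 0%Z.
Proof. by []. Qed.
Lemma vz1 : vz 1 = 1%Z.
Proof. rewrite -[1]/(1%:R) vz_nat Z.mod_small //; have := prime_gt1 pr; lia. Qed.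
Lemma vz_inj : injective vz.
Proof. move=> x y /Nat2Z.inj H; exact: val_inj. Qed.
Lemma vz_opp (x : F) : (vz (- x)%ring mod P = (- vz x) mod P)%Z.
Proof.
have H := vz_add x (- x); rewrite addrN vz0 in H.
have -> : (- vz x = vz (-x)%ring - (vz x + vz (-x)%ring))%Z by ring.
by rewrite Zminus_mod -H Z.sub_0_r Zmod_mod.
Qed.

Definition chi (x : F) : R := if x == 0 then 0%R else if x ^+ h == 1 then 1%R else (-1)%R.

Lemma chi0 : chi 0 = 0%R. Proof. by rewrite /chi eqxx. Qed.
Lemma chi1 : chi 1 = 1%R. Proof. by rewrite /chi oner_eq0 expr1n eqxx. Qed.

Lemma chi_mul x y : chi (x * y) = (chi x * chi y)%R.
Proof.
rewrite /chi mulf_eq0.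
case: eqP => [_|/eqP nx] /=; first lra.
case: eqP => [_|/eqP ny] /=; first lra.
have m1 := m1_neq1 pr p4.
rewrite exprMn.
case/orP: (xh_pm1 pr p4 nx) => /eqP ->; case/orP: (xh_pm1 pr p4 ny) => /eqP ->;
  rewrite ?mul1r ?mulr1 ?mulrNN ?mulr1 ?eqxx ?(negbTE m1) /=; lra.
Qed.

Lemma chi_opp x : chi (- x) = chi x.
Proof.
by rewrite /chi oppr_eq0 exprNn -signr_odd (negbTE (h_even pr p4)) expr0 mul1r.
Qed.

Lemma chi_sq x : x != 0 -> (chi x * chi x = 1)%R.
Proof.
move=> nx; rewrite /chi (negbTE nx); case: ifP => _; lra.
Qed.

Lemma chi_vals x : x != 0 -> chi x = 1%R \/ chi x = (-1)%R.
Proof. move=> nx; rewrite /chi (negbTE nx); case: ifP; auto. Qed.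

Lemma big_Rconst (I : finType) (A : pred I) :
  \big[Rplus/0%R]_(i | A i) 1%R = INR #|A|.
Proof.
rewrite big_const; elim: #|A| => [|n IH] //.
by rewrite iterS IH S_INR Rplus_comm.
Qed.


Lemma sum_Fp (G : nat -> R) :
  \big[Rplus/0%R]_(x : F) G (val x) = \big[Rplus/0%R]_(i < p) G i.
Proof.
have -> : \big[Rplus/0%R]_(x : F) G (val x) = \big[Rplus/0%R]_(i < (Zp_trunc (pdiv p)).+2) G i by [].
by rewrite (Fp_cast pr).
Qed.

Lemma sum_cz_ndiv (K : Z) : ~ (P | K)%Z ->
  \big[Rplus/0%R]_(x : F) cz P (K * vz x) = 0%R.
Proof.
move=> HK.
transitivity (\big[Rplus/0%R]_(i < p) cz P (K * Z.of_nat i)).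
  exact: (sum_Fp (fun i => cz P (K * Z.of_nat i))).
have := geom_sum P K P_pos HK; by rewrite Nat2Z.id.
Qed.

Lemma sum_cz_div (K : Z) : (P | K)%Z ->
  \big[Rplus/0%R]_(x : F) cz P (K * vz x) = IZR P.
Proof.
move=> [z ->].
transitivity (\big[Rplus/0%R]_(x : F) 1%R).
  apply: eq_bigr => x _; rewrite -(cz0 P); apply: cz_mod; first by have := P_pos; lia.
  rewrite Zmod_0_l -Z.mul_assoc Z.mul_comm -Z.mul_assoc Z.mul_comm; apply: Z_mod_mult.
by rewrite big_Rconst cardT -cardE card_Fp // INR_IZR_INZ.
Qed.

Lemma sum_nz (G : F -> R) :
  \big[Rplus/0%R]_(x | x != 0%ring) G x = (\big[Rplus/0%R]_(x : F) G x - G 0%ring)%R.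
Proof. rewrite [in RHS](bigD1 (0 : F)) //= Rplus_comm /Rminus Rplus_assoc Rplus_opp_r Rplus_0_r. by []. Qed.

Lemma sum_ne1 (G : F -> R) :
  \big[Rplus/0%R]_(x | x != 1%ring) G x = (\big[Rplus/0%R]_(x : F) G x - G 1%ring)%R.
Proof. rewrite [in RHS](bigD1 (1 : F)) //= Rplus_comm /Rminus Rplus_assoc Rplus_opp_r Rplus_0_r. by []. Qed.

Lemma sz_negF (k : Z) (x : F) : sz P (k * vz (- x)%ring) = (- sz P (k * vz x))%R.
Proof.
rewrite -sz_opp; apply: sz_mod; first by have := P_pos; lia.
rewrite Zmult_mod vz_opp -Zmult_mod; congr Z.modulo; ring.
Qed.

Lemma sum_even_sz (w : F -> R) (Hw : forall x, w (- x)%ring = w x) (k : Z) :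
  \big[Rplus/0%R]_(x : F) (w x * sz P (k * vz x))%R = 0%R.
Proof.
set S := \big[Rplus/0%R]_(x : F) _.
have E : S = (- S)%R.
  rewrite {1}/S (reindex_inj oppr_inj) /= /S.
  rewrite (big_morph Ropp Ropp_plus_distr Ropp_0).
  apply: eq_bigr => x _; rewrite Hw sz_negF; ring.
lra.
Qed.

Lemma sum_chi : \big[Rplus/0%R]_(x : F) chi x = 0%R.
Proof.
have [r /andP [nr hr]] := exists_nonres pr p4.
have cr : chi r = (-1)%R by rewrite /chi (negbTE nr) (negbTE hr).
set S := \big[Rplus/0%R]_(x : F) _.
have E : S = (- S)%R.
  rewrite {1}/S (reindex_inj (mulfI nr)) /= /S.
  rewrite (big_morph Ropp Ropp_plus_distr Ropp_0).
  apply: eq_bigr => x _; rewrite chi_mul cr; ring.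
lra.
Qed.

Lemma sum_chi2 : \big[Rplus/0%R]_(x : F) (chi x * chi x)%R = (IZR P - 1)%R.
Proof.
have E : \big[Rplus/0%R]_(x : F) (chi x * chi x)%R = \big[Rplus/0%R]_(x : F) (cz P (0 * vz x) - (if x == 0%ring then 1 else 0))%R.
  apply: eq_bigr => x _; rewrite Z.mul_0_l cz0; case: eqP => [->|/eqP nx].
    rewrite chi0; ring.
  rewrite chi_sq //; ring.
rewrite E big_split sum_cz_div; last by exists 0%Z.
rewrite -(big_morph Ropp Ropp_plus_distr Ropp_0) (bigD1 (0 : F)) //=.
have Z0 : forall z : R, z = 0%R -> (IZR P + - (1 + z) = IZR P - 1)%R by move=> z ->; ring.
apply: Z0; apply: big1 => x /negbTE -> //.
Qed.

End FpR.

Section Gauss.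
Variable p : nat.
Hypothesis pr : prime p.
Hypothesis p4 : (p %% 4 = 1)%N.
Local Notation F := 'F_p.
Local Notation P := (Z.of_nat p).
Hypothesis HP : Znumtheory.prime P.
Local Open Scope ring_scope.
Import GRing.Theory.

Lemma div_1mt (k : Z) (t : F) : ~ (P | k)%Z -> (P | k * (1 - vz t))%Z -> t = 1.
Proof.
move=> Hk /(prime_mult _ HP) [//|[z Hz]].
have R := vz_range pr p4 t. have Pp := P_pos pr p4. have P2 : (1 < P)%Z by have := prime_gt1 pr; lia.
have z0 : z = 0%Z by nia.
apply: vz_inj; rewrite (vz1 pr p4) //; lia.
Qed.

Lemma gauss (k : Z) : ~ (P | k)%Z ->
  let g := \big[Rplus/0%R]_(x : F) (chi x * cz P (k * vz x))%R in (g * g = IZR P)%R.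
Proof.
move=> Hk g.
set s := \big[Rplus/0%R]_(x : F) (chi x * sz P (k * vz x))%R.
have Hs : s = 0%R by apply: (sum_even_sz pr p4) => x; exact: (chi_opp pr p4).
have E1 : (g * g)%R = \big[Rplus/0%R]_(x : F) \big[Rplus/0%R]_(y : F)
     (chi x * chi y * cz P (k * vz x - k * vz y))%R.
  transitivity (g * g + s * s)%R; first by rewrite Hs; ring.
  have -> : (g * g + s * s)%R = \big[Rplus/0%R]_(x : F)
     ((chi x * cz P (k * vz x)) * g + (chi x * sz P (k * vz x)) * s)%R.
    by rewrite big_split /= -!big_distrl.
  apply: eq_bigr => x _; rewrite /g /s !big_distrr -big_split /=.
  apply: eq_bigr => y _; rewrite cz_sub; ring.
have E2 : forall x : F, x != 0 ->
    \big[Rplus/0%R]_(y : F) (chi x * chi y * cz P (k * vz x - k * vz y))%R =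
    \big[Rplus/0%R]_(t : F) (chi t * cz P ((k * (1 - vz t)) * vz x))%R.
  move=> x nx; rewrite (reindex_inj (mulfI nx)) /=.
  apply: eq_bigr => t _; rewrite (chi_mul pr p4) -Rmult_assoc chi_sq // Rmult_1_l.
  congr Rmult; apply: cz_mod; first by have := P_pos pr p4; lia.
  rewrite (vz_mul pr) (Z.mod_eq (vz x * vz t)); last by have := P_pos pr p4; lia.
  set w := (vz x * vz t)%Z.
  have -> : (k * vz x - k * (w - P * (w / P)) = k * (1 - vz t) * vz x + (k * (w / P)) * P)%Z.
    rewrite /w; ring.
  by rewrite Z_mod_plus_full.
rewrite E1.
transitivity (\big[Rplus/0%R]_(x : F | x != 0%ring) \big[Rplus/0%R]_(t : F)
     (chi t * cz P ((k * (1 - vz t)) * vz x))%R).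
  have S1 := sum_nz (fun x : F => \big[Rplus/0%R]_(y : F) (chi x * chi y * cz P (k * vz x - k * vz y))%R).
  cbv beta in S1.
  have G0 : \big[Rplus/0%R]_(y : F) (chi (0%ring : F) * chi y * cz P (k * vz (0%ring : F) - k * vz y))%R = 0%R.
    by apply: big1 => y _; rewrite chi0 !Rmult_0_l.
  rewrite G0 in S1.
  transitivity (\big[Rplus/0%R]_(x : F | x != 0%ring) \big[Rplus/0%R]_(y : F) (chi x * chi y * cz P (k * vz x - k * vz y))%R).
    by rewrite S1 Rminus_0_r.
  by apply: eq_bigr => x nx; apply: E2.
rewrite exchange_big /=.
transitivity (\big[Rplus/0%R]_(t : F) (chi t * ((if t == 1%ring then IZR P else 0%R) - 1))%R).
  apply: eq_bigr => t _.
  rewrite -big_distrr /=; congr Rmult.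
  rewrite (sum_nz (fun x : F => cz P (k * (1 - vz t) * vz x))) vz0 Z.mul_0_r cz0.
  case: eqP => [->|/eqP nt].
    by rewrite (vz1 pr p4) Z.sub_diag Z.mul_0_r (sum_cz_div pr p4) //; exists 0%Z.
  rewrite (sum_cz_ndiv pr p4) // => /(div_1mt Hk) E; by rewrite E eqxx in nt.
transitivity (\big[Rplus/0%R]_(t : F) ((chi t * (if t == 1%ring then IZR P else 0%R)) + - chi t))%R.
  by apply: eq_bigr => t _; ring.
rewrite big_split /= -(big_morph Ropp Ropp_plus_distr Ropp_0) (sum_chi pr p4) Ropp_0 Rplus_0_r.
rewrite (bigD1 (1%ring : F)) //= chi1.
have Z0 : forall z : R, z = 0%R -> (1 * IZR P + z = IZR P)%R by move=> z ->; ring.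
apply: Z0; apply: big1 => t /negbTE ->; by rewrite Rmult_0_r.
Qed.

Definition wq (x : F) : R := ((chi x * chi x + chi x) / 2)%R.

Lemma wq_opp x : wq (- x)%ring = wq x.
Proof. by rewrite /wq (chi_opp pr p4). Qed.

Lemma Sq0 (k : Z) : \big[Rplus/0%R]_(x : F) (wq x * sz P (k * vz x))%R = 0%R.
Proof. apply: (sum_even_sz pr p4); exact: wq_opp. Qed.

Lemma Cq_div (k : Z) : (P | k)%Z ->
  (2 * \big[Rplus/0%R]_(x : F) (wq x * cz P (k * vz x)))%R = (IZR P - 1)%R.
Proof.
move=> [z ->].
transitivity (\big[Rplus/0%R]_(x : F) ((chi x * chi x) + chi x))%R.
  rewrite big_distrr /=; apply: eq_bigr => x _.
  have -> : cz P (z * P * vz x) = 1%R.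
    rewrite -(cz0 P); apply: cz_mod; first by have := P_pos pr p4; lia.
    rewrite Zmod_0_l -Z.mul_assoc Z.mul_comm -Z.mul_assoc Z.mul_comm; apply: Z_mod_mult.
  rewrite /wq; field.
by rewrite big_split /= (sum_chi2 pr p4) (sum_chi pr p4) Rplus_0_r.
Qed.

Lemma zmul_cong (u u' v v' : Z) : (u mod P = u' mod P)%Z -> (v mod P = v' mod P)%Z ->
  ((u * v) mod P = (u' * v') mod P)%Z.
Proof. by move=> Hu Hv; rewrite Zmult_mod Hu Hv -Zmult_mod. Qed.

Lemma chi_inv (c : F) : c != 0%ring -> chi (c^-1)%ring = chi c.
Proof.
move=> nc; have := (chi_mul pr p4 c (c^-1)%ring); rewrite mulfV // chi1.
case: (chi_vals nc) => ->; case: (chi_vals (x := (c^-1)%ring) _); rewrite ?invr_eq0 // => ->; lra.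
Qed.

Lemma pair_sums (a c : F) (A C Y : Z) : a != 0%ring -> c != 0%ring -> chi a = (- chi c)%R ->
  (A mod P = vz a)%Z -> (C mod P = vz c)%Z -> ~ (P | Y)%Z ->
  let Ca := \big[Rplus/0%R]_(x : F) (wq x * cz P (A * Y * vz x))%R in
  let Cc := \big[Rplus/0%R]_(x : F) (wq x * cz P (C * Y * vz x))%R in
  (Ca + Cc = -1)%R /\ ((Ca - Cc) * (Ca - Cc) = IZR P)%R.
Proof.
move=> na nc hac HA HC HY Ca Cc.
have Pn0 : (P <> 0)%Z by have := P_pos pr p4; lia.
set r := (a / c)%ring.
have nr : r != 0%ring by rewrite mulf_eq0 negb_or na invr_eq0.
have cr : chi r = (-1)%R.
  rewrite /r (chi_mul pr p4) chi_inv // hac.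
  case: (chi_vals nc) => ->; lra.
have Hcr : (c * r = a)%ring by rewrite /r mulrC divfK.
have HAY : ~ (P | A * Y)%Z.
  move=> /(prime_mult _ HP) [[z Hz]|//]; move: na; apply/negP; rewrite negbK; apply/eqP.
  apply: vz_inj; rewrite vz0 -HA Hz; apply: Z_mod_mult.
have ECc : Cc = \big[Rplus/0%R]_(x : F) (((chi x * chi x - chi x) / 2) * cz P (A * Y * vz x))%R.
  rewrite /Cc (reindex_inj (mulfI nr)) /=; apply: eq_bigr => x _.
  congr Rmult.
    rewrite /wq (chi_mul pr p4) cr; field.
  apply: cz_mod => //.
  rewrite (vz_mul pr).
  have E1 : ((C * vz r) mod P = A mod P)%Z.
    rewrite HA -Hcr (vz_mul pr); apply: zmul_cong => //.
    by rewrite HC (vz_mod pr p4).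
  transitivity ((C * Y * (vz r * vz x)) mod P)%Z.
    by apply: zmul_cong => //; rewrite Zmod_mod.
  rewrite (_ : C * Y * (vz r * vz x) = (C * vz r) * (Y * vz x))%Z; last by ring.
  rewrite (_ : A * Y * vz x = A * (Y * vz x))%Z; last by ring.
  by apply: zmul_cong.
split.
  rewrite ECc /Ca -big_split /=.
  transitivity (\big[Rplus/0%R]_(x : F) (cz P (A * Y * vz x) - (if x == 0%ring then 1 else 0)))%R.
    apply: eq_bigr => x _; rewrite /wq; case: eqP => [->|/eqP nx].
      rewrite chi0 vz0 Z.mul_0_r cz0; field.
    rewrite chi_sq //; field.
  rewrite big_split /= (sum_cz_ndiv pr p4) //.
  rewrite -(big_morph Ropp Ropp_plus_distr Ropp_0) (bigD1 (0%ring : F)) //=.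
  have Z0 : forall z : R, z = 0%R -> (0 + - (1 + z) = -1)%R by move=> z ->; ring.
  apply: Z0; apply: big1 => x /negbTE -> //.
have -> : (Ca - Cc = \big[Rplus/0%R]_(x : F) (chi x * cz P (A * Y * vz x)))%R.
  rewrite ECc /Ca.
  have -> : forall u v : R, (u - v = u + - v)%R by move=> *; ring.
  rewrite (big_morph Ropp Ropp_plus_distr Ropp_0) -big_split /=.
  apply: eq_bigr => x _; rewrite /wq; field.
exact: gauss.
Qed.
End Gauss.

Lemma seq_iota (s k : nat) : List.seq s k = iota s k.
Proof. by elim: k s => //= k IH s; rewrite IH. Qed.

Lemma fold_big (l : list Z) (f : Z -> R) :
  fold_right Rplus 0%R (List.map f l) = \big[Rplus/0%R]_(x <- l) f x.
Proof. elim: l => [|x l IH] /=; by [rewrite big_nil | rewrite big_cons IH]. Qed.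

Lemma fold_sum (N : Z) (f : Z -> R) :
  fold_right Rplus 0%R (List.map f (zrange N)) = \big[Rplus/0%R]_(i < Z.to_nat N) f (Z.of_nat i).
Proof.
rewrite fold_big /zrange seq_iota big_map.
by rewrite -(big_mkord xpredT (fun i => f (Z.of_nat i))) /index_iota subn0.
Qed.

Lemma in_zrange (M z : Z) : List.In z (zrange M) <-> (0 <= z < M)%Z.
Proof.
rewrite /zrange in_map_iff; split.
  by move=> [i [<- /in_seq H]]; lia.
move=> H; exists (Z.to_nat z); split; first lia.
apply/in_seq; lia.
Qed.

Lemma GL (M N : Z) (Pj : Z -> bool) (T : Z -> Z -> bool) (g : Z -> Z) (G : Z -> R) :
  (0 <= M)%Z ->
  (forall x j, T x j = (x =? g j)%Z) ->
  (forall j, (0 <= j < M)%Z -> (0 <= g j < N)%Z) ->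
  (forall j j', (0 <= j < M)%Z -> (0 <= j' < M)%Z -> g j = g j' -> j = j') ->
  \big[Rplus/0%R]_(i < Z.to_nat N)
     (if List.existsb (fun j => Pj j && T (Z.of_nat i) j) (zrange M) then G (Z.of_nat i) else 0%R)
  = \big[Rplus/0%R]_(j < Z.to_nat M) (if Pj (Z.of_nat j) then G (g (Z.of_nat j)) else 0%R).
Proof.
move=> HM HT Hg Hinj.
transitivity (\big[Rplus/0%R]_(i < Z.to_nat N) \big[Rplus/0%R]_(j < Z.to_nat M)
   (if Pj (Z.of_nat j) && (Z.of_nat i =? g (Z.of_nat j))%Z then G (Z.of_nat i) else 0%R)).
  apply: eq_bigr => i _.
  case E: List.existsb.
    move/List.existsb_exists: E => [j0 [/in_zrange Hj0 /andP [P0 T0]]].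
    rewrite HT in T0; move/Z.eqb_eq: T0 => T0.
    have Hk : (Z.to_nat j0 < Z.to_nat M)%N by lia.
    rewrite (bigD1 (Ordinal Hk)) //= Z2Nat.id; last lia.
    rewrite P0 /= T0 Z.eqb_refl.
    rewrite big1 ?Rplus_0_r //.
    move=> j /eqP Hj; case H: (Pj _ && _) => //.
    move/andP: H => [_ /Z.eqb_eq H]; exfalso; apply: Hj; apply: val_inj => /=.
    have Hjr := ltn_ord j.
    have := Hinj _ _ (conj (Zle_0_nat j) (ltac:(lia) : (Z.of_nat j < M)%Z)) Hj0.
    move=> /(_ (esym H)); lia.
  rewrite big1 //= => j _; case H: (Pj _ && _) => //.
  have Ex : List.existsb (fun j => Pj j && T (Z.of_nat i) j) (zrange M) = true.
    apply/List.existsb_exists.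
    exists (Z.of_nat j); split; first by apply/in_zrange; have := ltn_ord j; lia.
    by rewrite HT.
  by rewrite Ex in E.
rewrite exchange_big /=; apply: eq_bigr => j _.
case Pjj: (Pj _) => /=; last by rewrite big1.
have Hj : (0 <= Z.of_nat j < M)%Z by have := ltn_ord j; lia.
have Hk : (Z.to_nat (g (Z.of_nat j)) < Z.to_nat N)%N by have := Hg _ Hj; lia.
rewrite (bigD1 (Ordinal Hk)) //= Z2Nat.id; last by have := Hg _ Hj; lia.
rewrite Z.eqb_refl big1 ?Rplus_0_r // => i /eqP Hi.
case H: (_ =? _)%Z => //; exfalso; apply: Hi; apply: val_inj => /=.
move/Z.eqb_eq: H => <-; lia.
Qed.

Section Links.
Variable p : nat.
Hypothesis pr : prime p.
Hypothesis p4 : (p %% 4 = 1)%N.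
Local Notation F := 'F_p.
Local Notation P := (Z.of_nat p).
Local Open Scope ring_scope.
Import GRing.Theory.

Definition inF (A : Z) : F := (Z.to_nat (A mod P))%:R.

Lemma vz_inF A : vz (inF A) = (A mod P)%Z.
Proof.
rewrite /inF (vz_nat pr) Z2Nat.id ?Zmod_mod //.
by have := Z.mod_pos_bound A P (P_pos pr p4); lia.
Qed.

Lemma inF_vz (x : F) : inF (vz x) = x.
Proof. by apply: vz_inj; rewrite vz_inF (vz_mod pr p4). Qed.

Lemma exb_F (f : Z -> bool) : List.existsb f (zrange P) = [exists t : F, f (vz t)].
Proof.
apply/idP/existsP.
  move/List.existsb_exists => [z [/in_zrange Hz fz]].
  exists (inF z); rewrite vz_inF Z.mod_small //.
move=> [t ft]; apply/List.existsb_exists; exists (vz t); split => //.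
apply/in_zrange; exact: (vz_range pr p4).
Qed.

Lemma isqr_F A : is_qr P A = [exists t : F, t * t == inF A].
Proof.
rewrite /is_qr exb_F; apply: eq_existsb => t.
apply/Z.eqb_spec/eqP.
  move=> H; apply: vz_inj; by rewrite (vz_mul pr) vz_inF.
by move=> /(congr1 (@vz p)); rewrite (vz_mul pr) vz_inF.
Qed.

Lemma inQ_F (x : F) : inQ P (vz x) = (x != 0) && (x ^+ h p == 1).
Proof.
rewrite /inQ isqr_F inF_vz.
have R := vz_range pr p4 x.
have -> : (vz x <? P)%Z = true by apply/Z.ltb_lt; lia.
case: eqP => [->|/eqP nx] /=; first by [].
have -> : (0 <? vz x)%Z = true.
  apply/Z.ltb_lt; have : vz x <> 0%Z by move=> H; move/eqP: nx; apply; apply: (@vz_inj p); rewrite H.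
  lia.
by rewrite (QR_square pr p4 nx).
Qed.

Lemma wq_val (x : F) : wq x = if (x != 0) && (x ^+ h p == 1) then 1%R else 0%R.
Proof.
rewrite /wq /chi; case: eqP => [_|/eqP nx] /=; first lra.
case: ifP => _; lra.
Qed.

Lemma legendre_F A : IZR (legendre A P) = chi (inF A).
Proof.
rewrite /legendre /chi.
have E : (A mod P =? 0)%Z = (inF A == 0).
  apply/Z.eqb_spec/eqP.
    by move=> H; apply: vz_inj; rewrite vz_inF H vz0.
  by move=> /(congr1 (@vz p)); rewrite vz_inF vz0.
rewrite E; case: eqP => [//|/eqP nx].
rewrite isqr_F -(QR_square pr p4 nx); by case: ifP.
Qed.

Lemma sumQ (G : Z -> R) :
  \big[Rplus/0%R]_(i < Z.to_nat P) (if inQ P (Z.of_nat i) then G (Z.of_nat i) else 0%R)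
  = \big[Rplus/0%R]_(x : F) (wq x * G (vz x))%R.
Proof.
rewrite Nat2Z.id -(sum_Fp pr (fun i => if inQ P (Z.of_nat i) then G (Z.of_nat i) else 0%R)).
apply: eq_bigr => x _.
rewrite -[Z.of_nat (val x)]/(vz x) inQ_F wq_val; case: ifP => _; ring.
Qed.
End Links.

Lemma f_mod (f : R -> R) (Hf : forall t k, f (t + 2 * IZR k * PI) = f t) (n t t' : Z) :
  (n <> 0)%Z -> (t mod n = t' mod n)%Z ->
  f (2 * PI * IZR t / IZR n) = f (2 * PI * IZR t' / IZR n).
Proof.
move=> HP Ht.
have -> : t = (t' + n * ((t / n) - (t' / n)))%Z.
  have H1 := Z_div_mod_eq_full t n; have H2 := Z_div_mod_eq_full t' n.
  rewrite Ht in H1. lia.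
rewrite plus_IZR mult_IZR.
have HP' : IZR n <> 0%R by apply not_0_IZR.
set k := (t / n - t' / n)%Z.
have -> : (2 * PI * (IZR t' + IZR n * IZR k) / IZR n = 2 * PI * IZR t' / IZR n + 2 * IZR k * PI)%R.
  by field.
by rewrite Hf.
Qed.

Lemma cong_aux (w m E y P n : Z) : n = (P * m)%Z -> (P <> 0)%Z -> (n <> 0)%Z ->
  (((((w mod P) * m + E) mod n) * y) mod n = ((w * m + E) * y) mod n)%Z.
Proof.
move=> Hn HP Hn0.
rewrite Zmult_mod Zmod_mod [in RHS]Zmult_mod.
have -> : (((w mod P) * m + E) mod n = (w * m + E) mod n)%Z.
  rewrite (Z.mod_eq w P) //.
  have -> : ((w - P * (w / P)) * m + E = (w * m + E) + (- (w / P)) * n)%Z by rewrite Hn; ring.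
  by rewrite Z_mod_plus_full.
by [].
Qed.

Section Piece.
Variable p : nat.
Hypothesis pr : prime p.
Hypothesis p4 : (p %% 4 = 1)%N.
Local Notation F := 'F_p.
Local Notation P := (Z.of_nat p).
Hypothesis HP : Znumtheory.prime P.

Lemma piece (n m A B E y : Z) (f : R -> R) (Hf : forall t k, f (t + 2 * IZR k * PI) = f t)
  (Hn : n = (P * m)%Z) (Hm : (0 < m)%Z) (HA : Z.gcd A P = 1%Z) :
  \big[Rplus/0%R]_(i < Z.to_nat n)
    (if List.existsb (fun j => List.existsb (fun q => inQ P q && ((A * q + B) mod P =? j)%Z) (zrange P)
                        && (Z.of_nat i =? (j * (n / P) + E) mod n)%Z) (zrange P)
     then f (2 * PI * IZR (Z.of_nat i * y) / IZR n) else 0%R)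
  = \big[Rplus/0%R]_(x : F) (wq x * f (2 * PI * IZR (A * y * vz x) / IZR P +
        (2 * PI * IZR (B * y) / IZR P + 2 * PI * IZR (E * y) / IZR n)))%R.
Proof.
have Pp := P_pos pr p4.
have Hnm : (n / P = m)%Z by rewrite Hn Z.mul_comm Z.div_mul; lia.
have npos : (0 < n)%Z by nia.
rewrite (@GL P n (fun j => List.existsb (fun q => inQ P q && ((A * q + B) mod P =? j)%Z) (zrange P))
   (fun x j => (x =? (j * (n / P) + E) mod n)%Z) (fun j => ((j * (n / P) + E) mod n)%Z)
   (fun x => f (2 * PI * IZR (x * y) / IZR n))); first last.
- move=> j j' Hj Hj' /(f_equal (fun z => z mod n)%Z); rewrite !Zmod_mod Hnm => H.
  have D : (n | (j * m + E) - (j' * m + E))%Z.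
    apply/Z.mod_divide; first lia.
    by rewrite Zminus_mod H Z.sub_diag Zmod_0_l.
  move: D => [z Hz]; rewrite Hn in Hz.
  have H2 : ((j - j') * m = (z * P) * m)%Z by rewrite -Z.mul_assoc -Hz; ring.
  apply Z.mul_reg_r in H2; last lia.
  have Hz1 : (- P < z * P < P)%Z by lia.
  have : z = 0%Z by nia.
  lia.
- move=> j _; apply: Z.mod_pos_bound; lia.
- by [].
- lia.
rewrite (@GL P P (inQ P) (fun x q => ((A * q + B) mod P =? x)%Z) (fun q => ((A * q + B) mod P)%Z)
   (fun j => f (2 * PI * IZR (((j * (n / P) + E) mod n) * y) / IZR n))); first last.
- move=> q q' Hq Hq' H.
  have D : (P | A * (q - q'))%Z.
    apply/Z.mod_divide; first lia.
    have -> : (A * (q - q') = (A * q + B) - (A * q' + B))%Z by ring.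
    by rewrite Zminus_mod H Z.sub_diag Zmod_0_l.
  have RP : rel_prime P A.
    apply: rel_prime_sym; apply/Zgcd_1_rel_prime; exact: HA.
  move: (Gauss _ _ _ D RP) => [z Hz].
  have Hz1 : (- P < z * P < P)%Z by lia.
  have : z = 0%Z by nia.
  lia.
- move=> j _; apply: Z.mod_pos_bound; lia.
- by move=> x j; rewrite Z.eqb_sym.
- lia.
rewrite (sumQ pr p4 (fun q => f (2 * PI * IZR ((((((A * q + B) mod P) * (n / P) + E) mod n) * y)) / IZR n))).

apply: eq_bigr => x _; congr Rmult.
set v := vz x.
set w := (A * v + B)%Z.
rewrite Hnm.
rewrite (@f_mod f Hf n _ ((w * m + E) * y)%Z); last first.
  - apply: cong_aux => //; lia.
  - lia.
congr f.
have HPn : IZR P <> 0%R by apply: not_0_IZR; lia.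
have Hmn : IZR m <> 0%R by apply: not_0_IZR; lia.
rewrite Hn /w; rewrite ?mult_IZR ?plus_IZR ?mult_IZR ?plus_IZR ?mult_IZR; field; auto.
Qed.
End Piece.

Lemma prime_nat (pn : nat) : Znumtheory.prime (Z.of_nat pn) -> prime pn.
Proof.
move=> HP; have H2 := prime_ge_2 _ HP.
apply/primeP; split; first lia.
move=> d /dvdnP [k Hk].
have : (Z.of_nat d | Z.of_nat pn)%Z by exists (Z.of_nat k); rewrite Hk; lia.
move/(prime_divisors _ HP) => H.
apply/orP; case: H => [|[|[|]]] H; lia.
Qed.

Lemma p4_nat (pn : nat) : (Z.of_nat pn mod 4 = 1)%Z -> (pn %% 4 = 1)%N.
Proof. move=> H; have := Zmod_nat pn 4; rewrite H; lia. Qed.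

Section Shift.
Variable p : nat.
Hypothesis pr : prime p.
Hypothesis p4 : (p %% 4 = 1)%N.
Local Notation F := 'F_p.
Local Notation P := (Z.of_nat p).

Definition Cq (k : Z) := \big[Rplus/0%R]_(x : F) (wq x * cz P (k * vz x))%R.

Lemma sum_cos_shift (k : Z) (th : R) :
  \big[Rplus/0%R]_(x : F) (wq x * cos (2 * PI * IZR (k * vz x) / IZR P + th))%R
  = (Cq k * cos th)%R.
Proof.
transitivity (\big[Rplus/0%R]_(x : F) (wq x * cz P (k * vz x) * cos th + - (wq x * sz P (k * vz x) * sin th)))%R.
  by apply: eq_bigr => x _; rewrite cos_plus /cz /sz; ring.
rewrite big_split /= -(big_morph Ropp Ropp_plus_distr Ropp_0) -!big_distrl /=.
by rewrite (Sq0 pr p4) Rmult_0_l Ropp_0 Rplus_0_r.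
Qed.

Lemma sum_sin_shift (k : Z) (th : R) :
  \big[Rplus/0%R]_(x : F) (wq x * sin (2 * PI * IZR (k * vz x) / IZR P + th))%R
  = (Cq k * sin th)%R.
Proof.
transitivity (\big[Rplus/0%R]_(x : F) (wq x * sz P (k * vz x) * cos th + (wq x * cz P (k * vz x) * sin th)))%R.
  by apply: eq_bigr => x _; rewrite sin_plus /cz /sz; ring.
rewrite big_split /= -!big_distrl /=.
by rewrite (Sq0 pr p4) Rmult_0_l Rplus_0_l.
Qed.
End Shift.

Lemma main (n p a b c : Z) (Hn : (0 < n)%Z)
  (Hp : Znumtheory.prime p) (Hp4 : (p mod 4 = 1)%Z) (Hpn : (p | n)%Z)
  (Ha : Z.gcd a p = 1%Z) (Hc : Z.gcd c p = 1%Z)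
  (Hleg : legendre a p = (- legendre c p)%Z)
  (Hdisj : forall x, (0 <= x < n)%Z -> inAplus n p a b x && inAminus n p c b x = false)
  (y : Z) :
  ((p | y)%Z ->
     (sigma_im n (inA n p a b c) y = 0 /\
      1 - IZR p <= sigma_re n (inA n p a b c) y <= IZR p - 1)%R) /\
  (~ (p | y)%Z ->
     ((sigma_re n (inA n p a b c) y) ^ 2
        + (sigma_im n (inA n p a b c) y) ^ 2 / IZR p = 1)%R).
Proof.
have [pn Epn] : exists pn : nat, p = Z.of_nat pn.
  by exists (Z.to_nat p); have := prime_ge_2 _ Hp; lia.
subst p.
have pr := prime_nat Hp. have p4 := p4_nat Hp4.
have P2 := prime_ge_2 _ Hp.
move: Hpn => [m Hm].
have mpos : (0 < m)%Z by nia.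
have HnPm : n = (Z.of_nat pn * m)%Z by lia.
set P := Z.of_nat pn.
set th := (2 * PI * IZR (b * y) / IZR P + 2 * PI * IZR (1 * y) / IZR n)%R.
have Hplus : forall f : R -> R, (forall t k, f (t + 2 * IZR k * PI) = f t) ->
  \big[Rplus/0%R]_(i < Z.to_nat n) (if inAplus n P a b (Z.of_nat i)
        then f (2 * PI * IZR (Z.of_nat i * y) / IZR n) else 0%R)
  = \big[Rplus/0%R]_(x : 'F_pn) (wq x * f (2 * PI * IZR (a * y * vz x) / IZR P + th))%R.
  move=> f Hf; exact (piece pr p4 b 1%Z y Hf HnPm mpos Ha).
have Hminus : forall f : R -> R, (forall t k, f (t + 2 * IZR k * PI) = f t) ->
  \big[Rplus/0%R]_(i < Z.to_nat n) (if inAminus n P c b (Z.of_nat i)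
        then f (2 * PI * IZR (Z.of_nat i * y) / IZR n) else 0%R)
  = \big[Rplus/0%R]_(x : 'F_pn) (wq x * f (2 * PI * IZR (c * y * vz x) / IZR P +
      (2 * PI * IZR (- b * y) / IZR P + 2 * PI * IZR (-1 * y) / IZR n)))%R.
  move=> f Hf; exact (piece pr p4 (- b)%Z (-1)%Z y Hf HnPm mpos Hc).
have Hphi : (2 * PI * IZR (- b * y) / IZR P + 2 * PI * IZR (-1 * y) / IZR n = - th)%R.
  rewrite /th (_ : (-1 * y = - y)%Z); last ring.
  rewrite Z.mul_1_l Z.mul_opp_l !opp_IZR /Rdiv; ring.
have Hsig : forall f : R -> R,
  fold_right Rplus 0%R (List.map (fun x => if inA n P a b c x then f (2 * PI * IZR (x * y) / IZR n) else 0%R) (zrange n))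
  = (\big[Rplus/0%R]_(i < Z.to_nat n) (if inAplus n P a b (Z.of_nat i)
        then f (2 * PI * IZR (Z.of_nat i * y) / IZR n) else 0%R)
   + \big[Rplus/0%R]_(i < Z.to_nat n) (if inAminus n P c b (Z.of_nat i)
        then f (2 * PI * IZR (Z.of_nat i * y) / IZR n) else 0%R))%R.
  move=> f; rewrite fold_sum -big_split; apply: eq_bigr => i _ /=.
  have := Hdisj (Z.of_nat i) (ltac:(have := ltn_ord i; lia)).
  rewrite /inA; case: (inAplus _ _ _ _ _); case: (inAminus _ _ _ _ _) => //= _; ring.
have Re : sigma_re n (inA n P a b c) y = ((Cq pn (a * y) + Cq pn (c * y)) * cos th)%R.
  rewrite /sigma_re (Hsig cos) (Hplus cos cos_periodZ) (Hminus cos cos_periodZ).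
  rewrite (sum_cos_shift pr p4) (sum_cos_shift pr p4) Hphi cos_neg; ring.
have Im : sigma_im n (inA n P a b c) y = ((Cq pn (a * y) - Cq pn (c * y)) * sin th)%R.
  rewrite /sigma_im (Hsig sin) (Hplus sin sin_periodZ) (Hminus sin sin_periodZ).
  rewrite (sum_sin_shift pr p4) (sum_sin_shift pr p4) Hphi sin_neg; ring.
rewrite Re Im; split.
  move=> [z Hz].
  have Da : (P | a * y)%Z by exists (a * z)%Z; rewrite Hz Z.mul_assoc.
  have Dc : (P | c * y)%Z by exists (c * z)%Z; rewrite Hz Z.mul_assoc.
  have Ca : (2 * Cq pn (a * y) = IZR P - 1)%R := Cq_div pr p4 Da.
  have Cc : (2 * Cq pn (c * y) = IZR P - 1)%R := Cq_div pr p4 Dc.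
  have HP2 : (2 <= IZR P)%R by apply: IZR_le.
  have := COS_bound th.
  move=> [c1 c2]; split; first nra.
  have E : Cq pn (a * y) = Cq pn (c * y) by lra.
  have E2 : (Cq pn (a * y) + Cq pn (c * y) = IZR P - 1)%R by lra.
  rewrite E2; split; nra.
move=> ny.
have nz : forall A : Z, Z.gcd A P = 1%Z -> (inF pn A != 0%ring).
  move=> A HA; apply/eqP => E.
  have : (A mod P = 0)%Z by rewrite -(vz_inF pr p4) E.
  move/Z.mod_divide => /(_ ltac:(lia)) D.
  move/Zgcd_1_rel_prime: HA => HA; inversion HA as [_ _ H3].
  have := H3 P D (Z.divide_refl P) => /Z.divide_1_r; lia.
have hac : chi (inF pn a) = (- chi (inF pn c))%R.
  by rewrite -!(legendre_F pr p4) Hleg opp_IZR.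
have [S D] : (Cq pn (a * y) + Cq pn (c * y) = -1 /\ (Cq pn (a * y) - Cq pn (c * y)) * (Cq pn (a * y) - Cq pn (c * y)) = IZR P)%R.
  exact: (pair_sums pr p4 Hp (nz a Ha) (nz c Hc) hac (esym (vz_inF pr p4 a)) (esym (vz_inF pr p4 c)) ny).
rewrite S.
have HP0 : (IZR P <> 0)%R by apply: not_0_IZR; lia.
set d := (Cq pn (a * y) - Cq pn (c * y))%R in D *.
have HS := sin2_cos2 th; rewrite /Rsqr in HS.
have -> : ((d * sin th) ^ 2 / IZR P = (d * d) * (sin th * sin th) / IZR P)%R by rewrite /Rdiv; ring.
rewrite D.
have -> : (IZR P * (sin th * sin th) / IZR P = sin th * sin th)%R by field.
nra.
Qed.


End Dev.

Theorem proposition5p1 (n p a b c : Z) (Hn : (0 < n)%Z)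
  (Hp : prime p) (Hp4 : p mod 4 = 1) (Hpn : (p | n)%Z)
  (Ha : Z.gcd a p = 1) (Hb : Z.gcd b p = 1) (Hc : Z.gcd c p = 1)
  (Hleg : legendre a p = - legendre c p)
  (* the union defining A is disjoint *)
  (Hdisj : forall x, (0 <= x < n)%Z -> inAplus n p a b x && inAminus n p c b x = false)
  (* A is a subgroup of (Z/nZ)^x *)
  (Hunit : forall x, (0 <= x < n)%Z -> inA n p a b c x = true -> Z.gcd x n = 1)
  (Hone : inA n p a b c (1 mod n) = true)
  (Hmul : forall x y, (0 <= x < n)%Z -> (0 <= y < n)%Z ->
          inA n p a b c x = true -> inA n p a b c y = true ->
          inA n p a b c ((x * y) mod n) = true)
  (y : Z) (Hy : (0 <= y < n)%Z) :
  ((p | y)%Z ->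
     (sigma_im n (inA n p a b c) y = 0 /\
      1 - IZR p <= sigma_re n (inA n p a b c) y <= IZR p - 1)%R) /\
  (~ (p | y)%Z ->
     ((sigma_re n (inA n p a b c) y) ^ 2
        + (sigma_im n (inA n p a b c) y) ^ 2 / IZR p = 1)%R).
Proof.
exact (Dev.main Hn Hp Hp4 Hpn Ha Hc Hleg Hdisj y).
Qed.
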